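(* Let $\Psi:\mathbb{R}\to\mathrm{Sp}(\mathbb{R}^{2n})$ be smooth with $\Psi(0)=\mathbb{1}$, $\Psi(t+T)=\Psi(t)\Psi(T)$ and $\Psi(-t)=I_{\mathbb{R}^{2n}}\Psi(t)I_{\mathbb{R}^{2n}}$ for all $t$. Then $\dim\ker(\Psi(T)-\mathbb{1}_{\mathbb{R}^{2n}})=0$ if and only if both $\Psi(T/2)\mathbb{R}^n\cap\mathbb{R}^n=\{0\}$ and $\Psi(T/2)\,i\mathbb{R}^n\cap i\mathbb{R}^n=\{0\}$.
   Context: $I_{\mathbb{R}^{2n}}=\begin{pmatrix}\mathbb{1}_n&0\\0&-\mathbb{1}_n\end{pmatrix}$ on $\mathbb{R}^{2n}=\mathbb{R}^n\oplus i\mathbb{R}^n$ with $\omega_{std}=\sum dx_i\wedge dy_i$; $\mathbb{R}^n=\mathrm{Fix}\,I_{\mathbb{R}^{2n}}$ and $i\mathbb{R}^n=\mathrm{Fix}(-I_{\mathbb{R}^{2n}})$. (Note that the hypotheses imply $\Psi(T)=I_{\mathbb{R}^{2n}}\Psi(T/2)^{-1}I_{\mathbb{R}^{2n}}\Psi(T/2)$.) *)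

(* Defs.v *)
(* Coordinates on R^{2n}: index i < n is x_{i+1}, index n+i is y_{i+1}. *)
From Stdlib Require Import Reals List.
Import ListNotations.
Open Scope R_scope.

Definition vec := nat -> R.
Definition mat := nat -> nat -> R.

Definition fsum (m : nat) (f : nat -> R) : R :=
  fold_right Rplus 0 (map f (seq 0 m)).

Definition mat_vec (n : nat) (A : mat) (v : vec) : vec :=
  fun i => fsum (2 * n) (fun j => A i j * v j).

Definition mat_mul (n : nat) (A B : mat) : mat :=
  fun i k => fsum (2 * n) (fun j => A i j * B j k).

Definition mat_eq (n : nat) (A B : mat) : Prop :=
  forall i j, (i < 2 * n)%nat -> (j < 2 * n)%nat -> A i j = B i j.
Definition vec_eq (n : nat) (v w : vec) : Prop :=
  forall i, (i < 2 * n)%nat -> v i = w i.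
Definition vec0 : vec := fun _ => 0.

Definition id_mat : mat := fun i j => if Nat.eqb i j then 1 else 0.

Definition I_refl (n : nat) : mat :=
  fun i j => if Nat.eqb i j then (if Nat.ltb i n then 1 else -1) else 0.

Definition omega_std (n : nat) (v w : vec) : R :=
  fsum n (fun i => v i * w (n + i)%nat - v (n + i)%nat * w i).

Definition symplectic (n : nat) (A : mat) : Prop :=
  forall v w, omega_std n (mat_vec n A v) (mat_vec n A w) = omega_std n v w.

(* R^n = Fix I = {y = 0};  i R^n = Fix(-I) = {x = 0} *)
Definition in_Rn (n : nat) (v : vec) : Prop :=
  forall i, (i < n)%nat -> v (n + i)%nat = 0.
Definition in_iRn (n : nat) (v : vec) : Prop :=
  forall i, (i < n)%nat -> v i = 0.

Definition in_ker_minus_id (n : nat) (A : mat) (v : vec) : Prop :=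
  vec_eq n (mat_vec n A v) v.

Definition smooth (f : R -> R) : Prop :=
  exists fs : nat -> R -> R, fs 0%nat = f /\
    forall k x, derivable_pt_lim (fs k) x (fs (S k) x).

Definition smooth_mat (n : nat) (Psi : R -> mat) : Prop :=
  forall i j, (i < 2 * n)%nat -> (j < 2 * n)%nat -> smooth (fun t => Psi t i j).

(* Main.v *)
Require Import Defs.
From Stdlib Require Import Reals Lra Lia List Arith.
Import ListNotations.
Open Scope R_scope.


Lemma fsum_S m f : fsum (S m) f = fsum m f + f m.
Proof.
  unfold fsum. rewrite seq_S, map_app, fold_right_app. simpl.
  generalize (map f (seq 0 m)). intro l. induction l; simpl; [ring| rewrite IHl; ring].
Qed.

Lemma fsum_0 f : fsum 0 f = 0.
Proof. reflexivity. Qed.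

Lemma fsum_ext m f g : (forall j, (j < m)%nat -> f j = g j) -> fsum m f = fsum m g.
Proof.
  induction m; intros H; [reflexivity|]. rewrite !fsum_S, IHm by (intros; apply H; lia).
  rewrite H by lia. reflexivity.
Qed.

Lemma fsum_plus m f g : fsum m (fun j => f j + g j) = fsum m f + fsum m g.
Proof. induction m; [rewrite ?fsum_0; ring|]. rewrite !fsum_S, IHm. ring. Qed.

Lemma fsum_mul_l m c f : c * fsum m f = fsum m (fun j => c * f j).
Proof. induction m; [rewrite ?fsum_0; ring|]. rewrite !fsum_S, <- IHm. ring. Qed.

Lemma fsum_mul_r m c f : fsum m f * c = fsum m (fun j => f j * c).
Proof. induction m; [rewrite ?fsum_0; ring|]. rewrite !fsum_S, <- IHm. ring. Qed.

Lemma fsum_zero m : fsum m (fun _ => 0) = 0.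
Proof. induction m; [reflexivity|]. rewrite fsum_S, IHm. ring. Qed.

Lemma fsum_swap m p F :
  fsum m (fun k => fsum p (fun j => F j k)) = fsum p (fun j => fsum m (fun k => F j k)).
Proof.
  induction m; [simpl; symmetry; apply fsum_zero|].
  rewrite fsum_S, IHm, <- fsum_plus. apply fsum_ext. intros. rewrite fsum_S. reflexivity.
Qed.

Lemma fsum_delta m i g :
  fsum m (fun j => if Nat.eqb i j then g j else 0) = if Nat.ltb i m then g i else 0.
Proof.
  induction m; [reflexivity|]. rewrite fsum_S, IHm.
  destruct (Nat.eqb_spec i m), (Nat.ltb_spec i m), (Nat.ltb_spec i (S m)); subst;
    try lia; ring.
Qed.

Lemma mat_vec_ext n A u u' i : vec_eq n u u' -> mat_vec n A u i = mat_vec n A u' i.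
Proof. intros H. unfold mat_vec. apply fsum_ext. intros. rewrite H by lia. reflexivity. Qed.

Lemma mat_vec_mat n A B u i : (i < 2*n)%nat -> mat_eq n A B -> mat_vec n A u i = mat_vec n B u i.
Proof. intros Hi H. unfold mat_vec. apply fsum_ext. intros. rewrite H by lia. reflexivity. Qed.

Lemma mat_vec_plus n A u v i :
  mat_vec n A (fun j => u j + v j) i = mat_vec n A u i + mat_vec n A v i.
Proof. unfold mat_vec. rewrite <- fsum_plus. apply fsum_ext. intros. ring. Qed.

Lemma mat_vec_minus n A u v i :
  mat_vec n A (fun j => u j - v j) i = mat_vec n A u i - mat_vec n A v i.
Proof.
  unfold mat_vec. replace (fsum (2*n) (fun j => A i j * u j) - fsum (2*n) (fun j => A i j * v j))
  with (fsum (2*n) (fun j => A i j * u j) + (-1) * fsum (2*n) (fun j => A i j * v j)) by ring.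
  rewrite fsum_mul_l, <- fsum_plus. apply fsum_ext. intros. ring.
Qed.

Lemma mat_vec_opp n A u i : mat_vec n A (fun j => - u j) i = - mat_vec n A u i.
Proof.
  unfold mat_vec. replace (- fsum (2*n) (fun j => A i j * u j)) with
   ((-1) * fsum (2*n) (fun j => A i j * u j)) by ring.
  rewrite fsum_mul_l. apply fsum_ext. intros. ring.
Qed.

Lemma mat_vec_zero n A i : mat_vec n A vec0 i = 0.
Proof. unfold mat_vec, vec0. rewrite (fsum_ext _ _ (fun _ => 0)) by (intros; ring). apply fsum_zero. Qed.

Lemma mat_vec_mul n A B u i :
  mat_vec n (mat_mul n A B) u i = mat_vec n A (mat_vec n B u) i.
Proof.
  unfold mat_vec, mat_mul.
  transitivity (fsum (2*n) (fun k => fsum (2*n) (fun j => A i j * B j k * u k))).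
  - apply fsum_ext. intros. rewrite fsum_mul_r. reflexivity.
  - rewrite fsum_swap. apply fsum_ext. intros. rewrite fsum_mul_l. apply fsum_ext. intros. ring.
Qed.

Lemma I_act n u i : (i < 2*n)%nat ->
  mat_vec n (I_refl n) u i = if Nat.ltb i n then u i else - u i.
Proof.
  intros Hi. unfold mat_vec, I_refl.
  transitivity (fsum (2*n) (fun j => if Nat.eqb i j then (if Nat.ltb i n then u j else - u j) else 0)).
  - apply fsum_ext. intros. destruct (Nat.eqb i j), (Nat.ltb i n); ring.
  - rewrite fsum_delta. destruct (Nat.ltb_spec i (2*n)); [reflexivity | lia].
Qed.

Lemma omega_ext n v v' w : vec_eq n v v' -> omega_std n v w = omega_std n v' w.
Proof. intros H. unfold omega_std. apply fsum_ext. intros. rewrite !H by lia. reflexivity. Qed.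

Definition e (k : nat) : vec := fun x => if Nat.eqb x k then 1 else 0.

Lemma sympl_inj0 n A u : symplectic n A ->
  (forall i, (i < 2*n)%nat -> mat_vec n A u i = 0) -> vec_eq n u vec0.
Proof.
  intros HS H.
  assert (Hw : forall w, omega_std n u w = 0).
  { intro w. rewrite <- HS. rewrite (omega_ext n _ vec0) by (intros i Hi; apply H; exact Hi).
    unfold omega_std, vec0. rewrite (fsum_ext _ _ (fun _ => 0)) by (intros; ring). apply fsum_zero. }
  intros i Hi. unfold vec0.
  destruct (Nat.ltb_spec i n).
  - specialize (Hw (e (n+i))). unfold omega_std, e in Hw.
    rewrite (fsum_ext n _ (fun j => if Nat.eqb i j then u j else 0)) in Hw.
    + rewrite fsum_delta in Hw. destruct (Nat.ltb_spec i n); [exact Hw|lia].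
    + intros j Hj. destruct (Nat.eqb_spec (n+j) (n+i)), (Nat.eqb_spec j (n+i)), (Nat.eqb_spec i j);
        try lia; ring.
  - specialize (Hw (e (i - n))). unfold omega_std, e in Hw.
    rewrite (fsum_ext n _ (fun j => if Nat.eqb (i-n) j then - u (n+j)%nat else 0)) in Hw.
    + rewrite fsum_delta in Hw. destruct (Nat.ltb_spec (i-n) n); [|lia].
      replace (n + (i-n))%nat with i in Hw by lia. lra.
    + intros j Hj. destruct (Nat.eqb_spec (n+j) (i-n)), (Nat.eqb_spec j (i-n)), (Nat.eqb_spec (i-n) j);
        try lia; ring.
Qed.

Lemma sympl_inj n A u u' : symplectic n A ->
  (forall i, (i < 2*n)%nat -> mat_vec n A u i = mat_vec n A u' i) -> vec_eq n u u'.
Proof.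
  intros HS H. assert (Hd := sympl_inj0 n A (fun j => u j - u' j) HS).
  intros i Hi. assert (u i - u' i = 0); [|lra].
  apply (Hd) with (i:=i); [|exact Hi]. intros k Hk. rewrite mat_vec_minus, H by exact Hk. ring.
Qed.

Theorem proposition3p4 (n : nat) (T : R) (Psi : R -> mat)
  (Hsmooth : smooth_mat n Psi)
  (Hsp : forall t, symplectic n (Psi t))
  (H0 : mat_eq n (Psi 0) id_mat)
  (Hper : forall t, mat_eq n (Psi (t + T)) (mat_mul n (Psi t) (Psi T)))
  (Hrev : forall t, mat_eq n (Psi (- t))
                      (mat_mul n (I_refl n) (mat_mul n (Psi t) (I_refl n)))) :
  (* dim ker (Psi T - 1) = 0, i.e. the kernel is {0} *)
  (forall v, in_ker_minus_id n (Psi T) v -> vec_eq n v vec0)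
  <->
  ((* Psi(T/2) R^n  ∩  R^n = {0} *)
   (forall w, (exists v, in_Rn n v /\ vec_eq n w (mat_vec n (Psi (T / 2)) v)) ->
              in_Rn n w -> vec_eq n w vec0)
   /\
   (* Psi(T/2) iR^n  ∩  iR^n = {0} *)
   (forall w, (exists v, in_iRn n v /\ vec_eq n w (mat_vec n (Psi (T / 2)) v)) ->
              in_iRn n w -> vec_eq n w vec0)).
Proof.
  set (A := Psi (T/2)). set (P := Psi T). set (I := I_refl n).
  assert (HA : symplectic n A) by apply Hsp.
  assert (Key : forall u i, (i < 2*n)%nat ->
     mat_vec n A u i = mat_vec n I (mat_vec n A (mat_vec n I (mat_vec n P u))) i).
  { intros u i Hi. unfold A, P, I. specialize (Hper (- (T/2))). replace (- (T/2) + T) with (T/2) in Hper by field.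
    rewrite (mat_vec_mat n _ _ u i Hi Hper), mat_vec_mul.
    rewrite (mat_vec_mat n _ _ _ i Hi (Hrev (T/2))), !mat_vec_mul. apply mat_vec_ext. intros j _. apply mat_vec_mul. }
  assert (Inj3 : forall u u', (forall i, (i < 2*n)%nat ->
      mat_vec n I (mat_vec n A (mat_vec n I u)) i = mat_vec n I (mat_vec n A (mat_vec n I u')) i) ->
      vec_eq n u u').
  { intros u u' H.
    assert (H2 : vec_eq n (mat_vec n I u) (mat_vec n I u')).
    { apply (sympl_inj n A _ _ HA). intros i Hi. specialize (H i Hi).
      unfold I in *. rewrite !I_act in H by exact Hi. destruct (Nat.ltb i n); lra. }
    intros i Hi. specialize (H2 i Hi). unfold I in *. rewrite !I_act in H2 by exact Hi.
    destruct (Nat.ltb i n); lra. }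
  split.
  - intros Hker. split.
    + intros w [v [Hv Hw]] Hwn.
      assert (HvI : vec_eq n (mat_vec n I v) v).
      { intros i Hi. unfold I. rewrite I_act by exact Hi. destruct (Nat.ltb_spec i n); [reflexivity|].
        specialize (Hv (i - n)%nat ltac:(lia)). replace (n + (i-n))%nat with i in Hv by lia.
        rewrite Hv. ring. }
      assert (Hk : in_ker_minus_id n P v).
      { apply Inj3. intros i Hi. rewrite <- Key by exact Hi.
        transitivity (mat_vec n I (mat_vec n A v) i).
        2:{ apply mat_vec_ext. intros j Hj. symmetry. apply mat_vec_ext. exact HvI. }
        unfold I. rewrite I_act by exact Hi.
        destruct (Nat.ltb_spec i n); [reflexivity|].
        rewrite <- Hw by exact Hi. specialize (Hwn (i - n)%nat ltac:(lia)).
        replace (n + (i-n))%nat with i in Hwn by lia. rewrite Hwn. ring. }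
      specialize (Hker v Hk). intros i Hi. rewrite Hw by exact Hi.
      rewrite (mat_vec_ext n _ _ vec0 i Hker). apply mat_vec_zero.
    + intros w [v [Hv Hw]] Hwn.
      assert (HvI : vec_eq n (mat_vec n I v) (fun j => - v j)).
      { intros i Hi. unfold I. rewrite I_act by exact Hi. destruct (Nat.ltb_spec i n); [|reflexivity].
        rewrite Hv by lia. ring. }
      assert (Hk : in_ker_minus_id n P v).
      { apply Inj3. intros i Hi. rewrite <- Key by exact Hi.
        transitivity (mat_vec n I (fun j => - mat_vec n A v j) i).
        2:{ apply mat_vec_ext. intros j Hj. rewrite <- mat_vec_opp. symmetry. apply mat_vec_ext. exact HvI. }
        unfold I. rewrite I_act by exact Hi.
        destruct (Nat.ltb_spec i n); [|ring].
        rewrite <- Hw by exact Hi. rewrite Hwn by lia. ring. }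
      specialize (Hker v Hk). intros i Hi. rewrite Hw by exact Hi.
      rewrite (mat_vec_ext n _ _ vec0 i Hker). apply mat_vec_zero.
  - intros [H1 H2] v Hv.
    set (x := fun j => if Nat.ltb j n then v j else 0).
    set (y := fun j => if Nat.ltb j n then 0 else v j).
    assert (Hxy : forall j, v j = x j + y j).
    { intro j. unfold x, y. destruct (Nat.ltb j n); ring. }
    assert (HIv : vec_eq n (mat_vec n I v) (fun j => x j - y j)).
    { intros i Hi. unfold I. rewrite I_act by exact Hi. unfold x, y. destruct (Nat.ltb i n); ring. }
    assert (Eq : forall i, (i < 2*n)%nat ->
       mat_vec n A x i + mat_vec n A y i =
       if Nat.ltb i n then mat_vec n A x i - mat_vec n A y i
       else - (mat_vec n A x i - mat_vec n A y i)).
    { intros i Hi. rewrite <- mat_vec_plus.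
      rewrite (mat_vec_ext n A _ v i) by (intros j _; symmetry; apply Hxy).
      rewrite Key by exact Hi. unfold I at 1. rewrite I_act by exact Hi.
      rewrite (mat_vec_ext n A (mat_vec n I (mat_vec n P v)) (fun j => x j - y j) i).
      - rewrite mat_vec_minus. reflexivity.
      - intros j Hj. rewrite <- HIv by exact Hj. apply mat_vec_ext. exact Hv. }
    assert (Hx : vec_eq n x vec0).
    { apply (sympl_inj0 n A x HA). intros i Hi.
      apply (H1 (mat_vec n A x)).
      - exists x. split; [|intros k _; reflexivity].
        intros k Hk. unfold x. destruct (Nat.ltb_spec (n+k) n); [lia|reflexivity].
      - intros k Hk. specialize (Eq (n+k)%nat ltac:(lia)).
        destruct (Nat.ltb_spec (n+k) n); [lia|]. lra.
      - exact Hi. }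
    assert (Hy : vec_eq n y vec0).
    { apply (sympl_inj0 n A y HA). intros i Hi.
      apply (H2 (mat_vec n A y)).
      - exists y. split; [|intros k _; reflexivity].
        intros k Hk. unfold y. destruct (Nat.ltb_spec k n); [reflexivity|lia].
      - intros k Hk. specialize (Eq k ltac:(lia)).
        destruct (Nat.ltb_spec k n); [|lia]. lra.
      - exact Hi. }
    intros i Hi. rewrite Hxy, Hx, Hy by exact Hi. unfold vec0. ring.
Qed.
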